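(* Let $X$ be an infinite set and let $w_1, w_2, \ldots \in \{a,b\}^+$ be such that no non-empty proper prefix of any $w_n$ is a suffix of any $w_m$ ($m,n\in\mathbb{N}$), and $w_n$ is not a subword of $w_m$ whenever $m \neq n$. Then $(w_1, w_2, \ldots)$ is a universal sequence for $X^X$.
   Context: $\{a,b\}^+$ is the free semigroup of non-empty words over $\{a,b\}$. $X^X$ is the full transformation monoid of all functions $X\to X$ under composition. A sequence $w_1, w_2, \ldots \in \{a,b\}^+$ is universal for a semigroup $T$ if for every sequence $f_1, f_2, \ldots \in T$ there is a semigroup homomorphism $\Phi: \{a,b\}^+ \to T$ with $(w_n)\Phi = f_n$ for all $n$. *)

(* Defs.v *)
From mathcomp Require Import all_boot.
Set Implicit Arguments. Unset Strict Implicit. Unset Printing Implicit Defensive.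

(* Words over {a,b}: a = false, b = true.  {a,b}^+ = non-empty words. *)
Definition word := seq bool.

(* Full transformation monoid X^X acting on the RIGHT, as in the paper:
   the product f g means "first f, then g", i.e. x (f g) = (x f) g. *)
Definition tmul (X : Type) (f g : X -> X) : X -> X := fun x => g (f x).

(* A semigroup homomorphism Phi : {a,b}^+ -> X^X, represented as a function
   on words which is multiplicative on non-empty words. *)
Definition is_sg_hom (X : Type) (Phi : word -> (X -> X)) : Prop :=
  forall u v : word, u != [::] -> v != [::] ->
    Phi (u ++ v) = tmul (Phi u) (Phi v).

Definition universal_for_transf (X : Type) (w : nat -> word) : Prop :=
  forall f : nat -> (X -> X),
    exists Phi : word -> (X -> X), is_sg_hom Phi /\ forall n, Phi (w n) = f n.

Definition subword (u v : word) : bool := infix u v.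

Definition infinite_type (X : Type) : Prop :=
  exists g : nat -> X, injective g.

(* Main.v *)
Require Import Defs.
From mathcomp Require Import all_boot zify.
From mathcomp Require Import boolp classical_sets.
Set Implicit Arguments. Unset Strict Implicit. Unset Printing Implicit Defensive.

Lemma cat_suffix (T : eqType) (a b c d : seq T) :
  a ++ b = c ++ d -> size b <= size d -> suffix b d.
Proof.
move=> E hs; apply/suffixP.
have hsz : size c <= size a.
  by have := congr1 size E; rewrite !size_cat; lia.
exists (drop (size c) a).
have := congr1 (drop (size c)) E; rewrite !drop_cat ltnn subnn drop0.
case: ltnP => h; first by move=> <-.
have -> : size c = size a by lia.
by rewrite subnn drop0 drop_size => <-.
Qed.

Lemma cat_cancel (T : eqType) (a b c : seq T) : a ++ c = b ++ c -> a = b.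
Proof.
move=> E; have := congr1 (take (size a)) E.
have hs : size a = size b by have := congr1 size E; rewrite !size_cat; lia.
by rewrite take_cat ltnn subnn take0 cats0 hs take_cat ltnn subnn take0 cats0.
Qed.

Lemma keylemma (w : nat -> word) :
  (forall n m (p : word), p != [::] -> size p < size (w n) ->
      prefix p (w n) -> ~~ suffix p (w m)) ->
  (forall n m, m <> n -> ~~ subword (w n) (w m)) ->
  forall m m' (v v' : word) j, 0 < j <= size (w m) ->
  v' ++ w m' = v ++ take j (w m) -> [/\ m' = m, j = size (w m) & v' = v].
Proof.
move=> H2 H3 m m' v v' j /andP[j0 jle] E.
remember (take j (w m)) as s eqn:Hs.
have ss : size s = j by rewrite Hs size_takel.
have pre : prefix s (w m) by rewrite prefixE ss Hs eqxx.
have infs : infix s (w m) by apply: prefixW.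
case: (leqP (size (w m')) j) => hj.
  have suf : suffix (w m') s by apply: (cat_suffix E); rewrite ss.
  have inf : subword (w m') (w m) by apply: suffix_infix_trans suf infs.
  have mm : m' = m.
    by apply/eqP; apply/negPn/negP => /eqP hne; move: (H3 m' m (nesym hne)); rewrite inf.
  subst m'.
  have jeq : j = size (w m) by lia.
  split => //.
  have ht : s = w m by rewrite Hs jeq take_size.
  by rewrite ht in E; exact: cat_cancel E.
have suf : suffix s (w m') by apply: (cat_suffix (esym E)); rewrite ss ltnW.
case: (ltnP j (size (w m))) => hj2.
  have : s != [::] by rewrite -size_eq0 ss -lt0n.
  move=> /(H2 m m' s) /(_ _ pre); rewrite ss => /(_ hj2); by rewrite suf.
have jeq : j = size (w m) by lia.
have ht : s = w m by rewrite Hs jeq take_size.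
rewrite ht in suf.
have ne : m' <> m by move=> hm; subst; lia.
by move: (H3 m m' ne); rewrite /subword (suffixW suf).
Qed.

Section Construction.
Variables (X K : Type) (E : K * word -> X) (D : X -> K * word).
Hypothesis ED : forall x, E (D x) = x.
Hypothesis DE : forall p, D (E p) = p.
Variables (w : nat -> word) (f : nat -> X -> X).

Definition step (p : K * word) (c : bool) : X :=
  match pselect (exists mv : nat * word, rcons p.2 c = mv.2 ++ w mv.1) with
  | left H => let mv := proj1_sig (cid H) in f mv.1 (E (p.1, mv.2))
  | right _ => E (p.1, rcons p.2 c)
  end.

Definition Act (c : bool) (x : X) : X := step (D x) c.
Definition Phi (u : word) (x : X) : X := foldl (fun y c => Act c y) x u.

Lemma Phi_hom : is_sg_hom Phi.
Proof.
move=> u v _ _; apply: funext => x; by rewrite /Phi foldl_cat.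
Qed.

Hypothesis H1 : forall n, w n != [::].
Hypothesis H2 : forall n m (p : word), p != [::] -> size p < size (w n) ->
      prefix p (w n) -> ~~ suffix p (w m).
Hypothesis H3 : forall n m, m <> n -> ~~ subword (w n) (w m).

Lemma Phi_prefix m k v i : i <= size (w m) ->
  Phi (take i (w m)) (E (k, v)) =
  if i == size (w m) then f m (E (k, v)) else E (k, v ++ take i (w m)).
Proof.
elim: i => [|i IH] hi.
  rewrite take0 /=.
  have /negbTE hz : size (w m) != 0 by rewrite size_eq0 H1.
  by rewrite eq_sym hz cats0.
have hi' : i < size (w m) by [].
rewrite (take_nth false hi').
have -> : Phi (rcons (take i (w m)) (nth false (w m) i)) (E (k, v)) =
  Act (nth false (w m) i) (Phi (take i (w m)) (E (k, v))) by rewrite /Phi foldl_rcons.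
rewrite IH; last exact: ltnW.

rewrite (ltn_eqF hi') /Act DE /step /=.
case: pselect => [H|H].
  case: (cid H) => [[m' v']] /= Hmv.
  rewrite rcons_cat -(take_nth false hi') in Hmv.
  have hh : 0 < i.+1 <= size (w m) by rewrite ltn0Sn hi.
  have [-> hj ->] := keylemma H2 H3 hh (esym Hmv).
  by rewrite hj eqxx.
case: eqP => hj.
  exfalso; apply: H; exists (m, v) => /=.
  by rewrite rcons_cat -(take_nth false hi') hj take_size.
by rewrite rcons_cat -(take_nth false hi').
Qed.

Lemma Phi_w m x : Phi (w m) x = f m x.
Proof.
rewrite -(ED x); case: (D x) => k v.
by have := @Phi_prefix m k v _ (leqnn _); rewrite take_size eqxx.
Qed.

End Construction.

Fixpoint build (X : Type) (x0 : X) (pk : (nat -> X) -> nat -> X) (n : nat) : nat -> X :=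
  match n with
  | 0 => fun _ => x0
  | n'.+1 => fun i => if i == n' then pk (build x0 pk n') n' else build x0 pk n' i
  end.

Lemma build_stable (X : Type) (x0 : X) pk m i : i < m ->
  build x0 pk m i = pk (build x0 pk i) i.
Proof.
elim: m => [//|m IH] hi /=.
case: eqP => [->//|ne]; apply: IH; move/eqP: ne; lia.
Qed.

Lemma ex_min_classic (Q : nat -> Prop) :
  (exists n, Q n) -> exists n, Q n /\ forall m, m < n -> ~ Q m.
Proof.
move=> [n Qn].
suff: forall N n, n <= N -> Q n -> exists n, Q n /\ forall m, m < n -> ~ Q m.
  by move/(_ n n (leqnn n) Qn).
elim=> [|N IH] k hk Qk.
  by exists k; split => // m; lia.
case: (pselect (exists m, m < k /\ Q m)) => [[m [hm Qm]]|H].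
  by apply: (IH m) => //; lia.
by exists k; split => // m hm Qm; apply: H; exists m.
Qed.

Section Fin.
Variables (X : Type) (x0 : X) (P : X -> Prop).

Definition cover n (e : nat -> X) := forall x, P x -> exists2 i, i < n & e i = x.

Lemma rem_cover n e i : i < n ->
  (forall x, P x -> e i = x -> exists2 j, j < n & j <> i /\ e j = x) ->
  cover n e -> cover n.-1 (fun j => if j < i then e j else e j.+1).
Proof.
move=> hi hrep cov x Px.
have [k hk ek] := cov x Px.
have [k' hk' [hne ek']] : exists2 k, k < n & k <> i /\ e k = x.
  case: (eqVneq k i) => [eki|neki]; first by subst; exact: hrep.
  by exists k => //; split => //; apply/eqP.
case: (ltngtP k' i) => h.
- by exists k'; [lia | rewrite h].
- exists k'.-1; first lia.
  have -> : (k'.-1 < i) = false by apply/negbTE; lia.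
  by rewrite prednK //; lia.
- by exfalso; apply: hne.
Qed.

Lemma fin_enum :
  ~ (exists h : nat -> X, injective h /\ forall n, P (h n)) ->
  exists n (e : nat -> X), (forall i, i < n -> P (e i)) /\
    (forall i j, i < n -> j < n -> e i = e j -> i = j) /\ cover n e.
Proof.
move=> Hno.
have [n0 [e0 cov0]] : exists n e, cover n e.
  apply: contrapT => Hn.
  have pick : forall (e : nat -> X) n, exists x, P x /\ (forall i, i < n -> e i <> x).
    move=> e n; apply: contrapT => Hc; apply: Hn; exists n, e => x Px.
    apply: contrapT => Hx; apply: Hc; exists x; split => // i hi ei; apply: Hx; by exists i.
  pose pk e n := proj1_sig (cid (pick e n)).
  have pkP e n : P (pk e n) /\ (forall i, i < n -> e i <> pk e n).
    by rewrite /pk; case: cid.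
  apply: Hno; exists (fun n => pk (build x0 pk n) n); split; last first.
    by move=> n; case: (pkP (build x0 pk n) n).
  have key i j : i < j -> pk (build x0 pk i) i <> pk (build x0 pk j) j.
    move=> hij; rewrite -(build_stable x0 pk hij).
    by case: (pkP (build x0 pk j) j) => _ /(_ i hij).
  move=> i j hij; case: (ltngtP i j) => h //.
  - by exfalso; apply: (key _ _ h).
  - by exfalso; apply: (key _ _ h).
have hex : exists n, exists e, cover n e by exists n0, e0.
have [n [[e cov] nmin]] := ex_min_classic hex.
exists n, e; split; [|split] => //.
- move=> i hi; apply: contrapT => nP.
  apply: (nmin n.-1); first lia.
  exists (fun j => if j < i then e j else e j.+1).
  apply: rem_cover => // x Px ex; by exfalso; apply: nP; rewrite ex.
- move=> i j hi hj eij; apply: contrapT => ne.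
  wlog lt : i j hi hj eij ne / i < j.
    move=> W; case: (ltngtP i j) => h.
    + exact: W h.
    + by apply: (W j i) => //; move=> e'; apply: ne.
    + by apply: ne.
  apply: (nmin n.-1); first lia.
  exists (fun k => if k < j then e k else e k.+1).
  apply: rem_cover => // x Px ex; exists i => //; split; [lia | by rewrite eij].
Qed.
End Fin.
Section Decomp.
Local Open Scope classical_set_scope.

Definition goodfam (X : Type) (F : set (word -> X)) :=
  forall s, F s -> injective s /\ forall s' u u', F s' -> s u = s' u' -> s = s'.

Lemma allf_nseq (u : word) : all negb u -> u = nseq (size u) false.
Proof. by elim: u => [//|[] u IH] //= /IH <-. Qed.

Lemma decomp (X : Type) : infinite_type X ->
  exists (K : Type) (E : K * word -> X) (D : X -> K * word),
    (forall x, E (D x) = x) /\ (forall p, D (E p) = p).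
Proof.
move=> [g ginj].
have [F [goodF maxF]] : exists F : set (word -> X), goodfam F /\ forall B, F `<` B -> ~ goodfam B.
  apply: (@Zorn_bigcup (word -> X) (@goodfam X)) => G GG tot s [F1 GF1 F1s]; split.
    by case: (GG _ GF1 _ F1s).
  move=> s' u u' [F2 GF2 F2s'] e.
  case: (tot _ _ GF1 GF2) => sub.
  - by case: (GG _ GF2 s (sub _ F1s)) => _ /(_ s' u u' F2s' e).
  - by case: (GG _ GF1 s F1s) => _ /(_ s' u u' (sub _ F2s') e).
pose covered y := exists s u, F s /\ s u = y.
have noinj : ~ exists h : nat -> X, injective h /\ forall n, ~ covered (h n).
  move=> [h [hi hc]].
  pose snew := fun u : word => h (pickle u).
  apply: (maxF (F `|` [set snew])).
    split; first by move=> s Fs; left.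
    move=> BF; have Fs := BF snew (or_intror erefl).
    by apply: (hc (pickle ([::] : word))); exists snew, [::].
  move=> s [Fs|->].
    case: (goodF s Fs) => sinj sdis; split => // s' u u' [Fs'|->] e.
      exact: sdis e.
    by exfalso; apply: (hc (pickle u')); exists s, u.
  split; first by move=> u u' /hi /(pcan_inj pickleK).
  move=> s' u u' [Fs'|->] e //.
  by exfalso; apply: (hc (pickle u)); exists s', u'; split.
have [s0 Fs0] : exists s0, F s0.
  apply: contrapT => nF; apply: noinj; exists g; split => // n [s [u [Fs _]]].
  by apply: nF; exists s.
have s0inj : injective s0 by case: (goodF s0 Fs0).
have [n [e [eP [einj ecov]]]] := @fin_enum X (g 0) (fun y => ~ covered y) noinj.
have cov0 u : covered (s0 u) by exists s0, u.
pose t (u : word) := if all negb u then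
    (if size u < n then e (size u) else s0 (nseq (size u - n) false)) else s0 u.
have t_inj : injective t.
  move=> u u'; rewrite /t.
  case Au: (all negb u); case Au': (all negb u').
  - case: (ltnP (size u) n) => h; case: (ltnP (size u') n) => h'.
    + move=> /(einj _ _ h h') hs.
      by rewrite (allf_nseq Au) (allf_nseq Au') hs.
    + by move=> ee; exfalso; apply: (eP _ h); rewrite ee.
    + by move=> ee; exfalso; apply: (eP _ h'); rewrite -ee.
    + move=> /s0inj /(congr1 size); rewrite !size_nseq => hs.
      rewrite (allf_nseq Au) (allf_nseq Au'); congr nseq; lia.
  - case: ltnP => h.
    + by move=> ee; exfalso; apply: (eP _ h); rewrite ee.
    + by move=> /s0inj ee; move: Au'; rewrite -ee all_nseq /= orbT.
  - case: ltnP => h.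
    + by move=> ee; exfalso; apply: (eP _ h); rewrite -ee.
    + by move=> /s0inj ee; move: Au; rewrite ee all_nseq /= orbT.
  - exact: s0inj.
have t_cases u : (exists2 i, i < n & t u = e i) \/ exists u', t u = s0 u'.
  rewrite /t; case: (all negb u); last by right; exists u.
  by case: ltnP => h; [left; exists (size u) | right; eexists].
have t_sur1 u' : exists u, t u = s0 u'.
  case Au': (all negb u').
    exists (nseq (size u' + n) false); rewrite /t all_nseq /= orbT size_nseq.
    have -> : (size u' + n < n) = false by apply/negbTE; lia.
    by rewrite addnK -allf_nseq.
  by exists u'; rewrite /t Au'.
have t_sur2 i : i < n -> exists u, t u = e i.
  by move=> hi; exists (nseq i false); rewrite /t all_nseq /= orbT size_nseq hi.
pose K := {s : word -> X | F s}.
pose E (p : K * word) : X :=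
  if pselect (proj1_sig p.1 = s0) then t p.2 else proj1_sig p.1 p.2.
have Einj : injective E.
  move=> [[a Fa] u] [[b Fb] u']; rewrite /E /=.
  case: pselect => ha; case: pselect => hb /=.
  - subst a b; move=> /t_inj ->; by rewrite (Prop_irrelevance Fa Fb).
  - move=> ee; exfalso; case: (t_cases u) => [[i hi ei]|[u'' eu]].
      by apply: (eP _ hi); exists b, u'; rewrite -ei ee.
    apply: hb; case: (goodF s0 Fs0) => _ /(_ b u'' u' Fb); rewrite -eu ee.
    by move=> /(_ erefl).
  - move=> ee; exfalso; case: (t_cases u') => [[i hi ei]|[u'' eu]].
      by apply: (eP _ hi); exists a, u; rewrite -ei ee.
    apply: ha; case: (goodF s0 Fs0) => _ /(_ a u'' u Fa); rewrite -eu ee.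
    by move=> /(_ erefl).
  - move=> ee; case: (goodF a Fa) => ainj /(_ b u u' Fb ee) hab; subst b.
    by rewrite (ainj _ _ ee) (Prop_irrelevance Fa Fb).
have Esur x : exists p, E p = x.
  case: (pselect (covered x)) => [[s [u [Fs <-]]]|nc].
    case: (pselect (s = s0)) => hs.
      subst s; have [u0 hu0] := t_sur1 u.
      exists (exist _ s0 Fs, u0); rewrite /E /=; case: pselect => //.
    by exists (exist _ s Fs, u); rewrite /E /=; case: pselect.
  have [i hi <-] := ecov x nc.
  have [u hu] := t_sur2 _ hi.
  exists (exist _ s0 Fs0, u); rewrite /E /=; case: pselect => //.
exists K, E, (fun x => proj1_sig (cid (Esur x))).
split => [x|p]; first by case: cid.
by apply: Einj; case: cid.
Qed.
End Decomp.

Theorem corollary3p3 (X : Type) (HX : infinite_type X) (w : nat -> word) :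
  (forall n, w n != [::]) ->
  (forall n m (p : word), p != [::] -> size p < size (w n) ->
      prefix p (w n) -> ~~ suffix p (w m)) ->
  (forall n m, m <> n -> ~~ subword (w n) (w m)) ->
  universal_for_transf X w.
Proof.
move=> H1 H2 H3 f.
have [K [E [D [ED DE]]]] := decomp HX.
exists (@Phi X K E D w f); split; first exact: Phi_hom.
by move=> n; apply: funext => x; apply: Phi_w.
Qed.
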